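(* Let $p$ be prime and let $V<W\le\mathbb F_p^k$ be subspaces with $\dim W=\dim V+1$. Let $x\in V^\perp\setminus W^\perp$ satisfy $|x|=\min_{v\in V^\perp\setminus W^\perp}|v|$. Then there is no $y\in V^\perp$ with $y\notin\langle x\rangle$ and $\mathrm{Supp}(y)\subseteq\mathrm{Supp}(x)$.
   Context: For $x\in\mathbb F_p^k$, $\mathrm{Supp}(x)=\{i: x_i\ne0\}$ and $|x|=|\mathrm{Supp}(x)|$. $V^\perp$ is the orthogonal complement under the standard dot product, and $\langle x\rangle$ is the span of $x$. *)

(* Defs.v *)
From HB Require Import structures.
From mathcomp Require Import all_boot all_order all_algebra.
Set Implicit Arguments. Unset Strict Implicit. Unset Printing Implicit Defensive.
Import GRing.Theory.
Local Open Scope ring_scope.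

Definition dotv (F : fieldType) (k : nat) (x y : 'rV[F]_k) : F :=
  \sum_(i < k) x 0 i * y 0 i.

Definition supp (F : fieldType) (k : nat) (x : 'rV[F]_k) : {set 'I_k} :=
  [set i | x 0 i != 0].

Definition wt (F : fieldType) (k : nat) (x : 'rV[F]_k) : nat := #|supp x|.

Definition in_perp (F : fieldType) (k : nat) (V : {vspace 'rV[F]_k}) (x : 'rV[F]_k) : Prop :=
  forall v, v \in V -> dotv x v = 0.

(* Main.v *)
Require Import Defs.
From mathcomp Require Import all_boot all_order all_algebra.
Local Open Scope ring_scope.
Import GRing.Theory.
From Stdlib Require Import Classical.

Lemma dotv_lin (F : fieldType) (k : nat) (a : F) (x y w : 'rV[F]_k) :
  dotv (a *: x + y) w = a * dotv x w + dotv y w.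
Proof.
rewrite /dotv mulr_sumr -big_split /=; apply: eq_bigr => i _.
by rewrite !mxE mulrDl mulrA.
Qed.

Lemma perp_lin (F : fieldType) (k : nat) (V : {vspace 'rV[F]_k}) a x y :
  in_perp V x -> in_perp V y -> in_perp V (a *: x + y).
Proof. by move=> hx hy v hv; rewrite dotv_lin hx // hy // mulr0 addr0. Qed.

Theorem lemma7p3 (p k : nat) (pp : prime p) (V W : {vspace 'rV['F_p]_k})
  (x : 'rV['F_p]_k) :
  (V <= W)%VS -> \dim W = (\dim V).+1 ->
  in_perp V x -> ~ in_perp W x ->
  (forall v : 'rV['F_p]_k, in_perp V v -> ~ in_perp W v -> (wt x <= wt v)%N) ->
  ~ (exists y : 'rV['F_p]_k,
       [/\ in_perp V y, y \notin <[x]>%VS & supp y \subset supp x]).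
Proof.
move=> _ _ hxV hxW hmin [y [hyV hyx hsub]].
have [w [hwW hxw]] : exists w, w \in W /\ dotv x w != 0.
  apply: NNPP => H; apply: hxW => v hv.
  by apply/eqP; apply: contraT => hn; case: H; exists v.
pose c := dotv y w / dotv x w.
pose z := (- c) *: x + y.
have hzV : in_perp V z by apply: perp_lin.
have hzw : dotv z w = 0.
  by rewrite /z dotv_lin /c mulNr divfK // addNr.
have hz0 : z != 0.
  apply: contraNneq hyx => hz.
  have -> : y = c *: x by apply/eqP; rewrite -subr_eq0 addrC -scaleNr; apply/eqP.
  by rewrite memvZ // memv_line.
have [i hi] : exists i, z 0 i != 0.
  apply: NNPP => H; move/eqP: hz0; apply; apply/rowP => j.
  rewrite [RHS]mxE; apply/eqP; apply: contraT => hn; case: H; exists j; exact: hn.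
have hzx : forall j, x 0 j = 0 -> z 0 j = 0.
  move=> j hj; rewrite /z !mxE hj mulr0 add0r.
  apply/eqP; apply: contraT => hn.
  have : j \in supp x by apply: (subsetP hsub); rewrite inE.
  by rewrite inE hj eqxx.
clearbody z.
have hxi : x 0 i != 0 by apply: contra hi => /eqP /hzx ->.
pose u := (- (x 0 i / z 0 i)) *: z + x.
have huV : in_perp V u by apply: perp_lin.
have huW : ~ in_perp W u.
  move=> H; move: (H w hwW); rewrite /u dotv_lin hzw mulr0 add0r => /eqP.
  by rewrite (negbTE hxw).
have := hmin u huV huW.
have hsu : supp u \subset supp x :\ i.
  apply/subsetP => j; rewrite !inE /u !mxE => hj.
  apply/andP; split.
    apply: contraNneq hj => ->; rewrite mulNr divfK // addNr //.
  apply: contraNneq hj => hxj; rewrite hxj (hzx _ hxj) mulr0 add0r //.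
have hix : i \in supp x by rewrite inE.
have h1 := subset_leq_card hsu.
rewrite /wt (cardsD1 i (supp x)) hix add1n => h2.
by have := leq_trans h2 h1; rewrite ltnn.
Qed.
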